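(* Let $p$ be any prime, $G=SL(2,\mathbb{Z}_p)$, $T=\{F\in SL(2,\mathbb{Z}_p):\mathrm{Tr}(F)\neq 2\pmod p\}$ and $\Gamma=\Gamma(G,T)$. Then the independence number satisfies $p\leq\alpha(\Gamma)\leq p+1$.
   Context: The Cayley graph $\Gamma(G,T)$ has vertex set $G$ and an edge between $g_1,g_2$ iff $g_1^{-1}g_2\in T$. An independent set is a set of pairwise non-adjacent vertices; $\alpha(\Gamma)$ is the largest size of an independent set. *)

(* Defs.v *)
From HB Require Import structures.
From mathcomp Require Import all_boot all_order all_algebra all_fingroup.
Set Implicit Arguments. Unset Strict Implicit. Unset Printing Implicit Defensive.
Import GRing.Theory.
Local Open Scope ring_scope.

(* Z_p for p prime is the prime field 'F_p; SL(2,Z_p) = 2x2 matrices of det 1. *)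
Definition SL2 (p : nat) : {set 'M['F_p]_2} := [set M | \det M == 1].

Definition Tset (p : nat) : {set 'M['F_p]_2} :=
  [set F in SL2 p | \tr F != 2%:R].

Definition cayley_adj (p : nat) (g1 g2 : 'M['F_p]_2) : bool :=
  (invmx g1 *m g2) \in Tset p.

Definition independent (p : nat) (S : {set 'M['F_p]_2}) : bool :=
  (S \subset SL2 p) &&
  [forall g1 in S, forall g2 in S, (g1 != g2) ==> ~~ cayley_adj g1 g2].

Definition alpha (p : nat) : nat :=
  \max_(S : {set 'M['F_p]_2} | independent S) #|S|.

(* Main.v *)
From HB Require Import structures.
Require Import Defs.
From mathcomp Require Import all_boot all_order all_algebra all_fingroup.
From mathcomp Require Import ring.
Set Implicit Arguments. Unset Strict Implicit. Unset Printing Implicit Defensive.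
Import GRing.Theory.
Local Open Scope ring_scope.
Section S.
Variable R : comUnitRingType.
Lemma l00 : lift (0 : 'I_2) (0 : 'I_1) = 1. Proof. by apply/val_inj. Qed.
Lemma l10 : lift (1 : 'I_2) (0 : 'I_1) = 0. Proof. by apply/val_inj. Qed.
Lemma o0 : (ord0 : 'I_2) = 0. Proof. by apply/val_inj. Qed.
Lemma lo0 : (lift ord0 ord0 : 'I_2) = 1. Proof. by apply/val_inj. Qed.
Lemma det2 (A : 'M[R]_2) : \det A = A 0 0 * A 1 1 - A 0 1 * A 1 0.
Proof.
rewrite (expand_det_row _ 0) !big_ord_recl big_ord0 /cofactor !det_mx11 !mxE /=.
rewrite addr0 /= !o0 !lo0 !l10 /bump /= ?add0n ?addn0 ?expr0 ?expr1.
ring.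
Qed.
Lemma tr2 (A : 'M[R]_2) : \tr A = A 0 0 + A 1 1.
Proof. by rewrite /mxtrace !big_ord_recl big_ord0 addr0 o0 lo0. Qed.
Lemma trinv2 (A B : 'M[R]_2) : \det A = 1 ->
  \tr (invmx A *m B) = A 1 1 * B 0 0 - A 0 1 * B 1 0 - A 1 0 * B 0 1 + A 0 0 * B 1 1.
Proof.
move=> hA; rewrite /invmx unitmxE hA unitr1 invr1 scale1r tr2 !mxE !big_ord_recl big_ord0 !mxE.
rewrite big_ord0 /cofactor !det_mx11 !mxE /= !o0 !lo0 !l10 /bump /= ?add0n ?addn0 ?expr0 ?expr1 ?expr2.
ring.
Qed.
Lemma mat2_eq (M N : 'M[R]_2) : M 0 0 = N 0 0 -> M 0 1 = N 0 1 ->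
  M 1 0 = N 1 0 -> M 1 1 = N 1 1 -> M = N.
Proof.
move=> h1 h2 h3 h4; apply/matrixP => i j.
have hi : (i == 0) || (i == 1) by case: i => [[|[|i]] Hi].
have hj : (j == 0) || (j == 1) by case: j => [[|[|j]] Hj].
by case/orP: hi => /eqP ->; case/orP: hj => /eqP ->.
Qed.
End S.

Section K.
Variable F : fieldType.
Lemma key (a b c d a' b' c' d' : F) :
 a + d = 2%:R -> a*d - b*c = 1 -> a'+d' = 2%:R -> a'*d' - b'*c' = 1 ->
 d*a' - b*c' - c*b' + a*d' = 2%:R ->
 (if b != 0 then b else c) = (if b' != 0 then b' else c') ->
 [/\ a = a', b = b', c = c' & d = d'].
Proof.
move=> h1 h2 h3 h4 h5 hk.
have hd : d = 2%:R - a by rewrite -h1 (addrC a d) addrK.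
have hd' : d' = 2%:R - a' by rewrite -h3 (addrC a' d') addrK.
subst d d'.
have sq0 : forall x : F, x ^+ 2 = 0 -> x = 0 by move=> x /eqP; rewrite sqrf_eq0 => /eqP.
case: (eqVneq b 0) => [b0|bn0]; case: (eqVneq b' 0) => [b'0|b'n0]; move: hk.
- rewrite b0 b'0 !eqxx /= => cc.
  have e : (a - 1) ^+ 2 = 1 - (a * (2%:R - a) - b * c) by rewrite b0; ring.
  have e' : (a' - 1) ^+ 2 = 1 - (a' * (2%:R - a') - b' * c') by rewrite b'0; ring.
  rewrite h2 subrr in e; rewrite h4 subrr in e'.
  move/sq0/eqP: e; rewrite subr_eq0 => /eqP ea.
  move/sq0/eqP: e'; rewrite subr_eq0 => /eqP ea'.
  by split; rewrite ?b0 ?b'0 ?ea ?ea' ?cc.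
- rewrite b0 eqxx b'n0 /= => cb.
  have e : (a - 1) ^+ 2 = 1 - (a * (2%:R - a) - b * c) by rewrite b0; ring.
  rewrite h2 subrr in e.
  move/sq0/eqP: e; rewrite subr_eq0 => /eqP ea.
  have e : b' ^+ 2 = 2%:R - ((2%:R - a) * a' - b * c' - c * b' + a * (2%:R - a'))
    by rewrite b0 cb ea; ring.
  rewrite h5 subrr in e.
  by move: b'n0; rewrite (sq0 _ e) eqxx.
- rewrite b'0 eqxx bn0 /= => cb.
  have e : (a' - 1) ^+ 2 = 1 - (a' * (2%:R - a') - b' * c') by rewrite b'0; ring.
  rewrite h4 subrr in e.
  move/sq0/eqP: e; rewrite subr_eq0 => /eqP ea.
  have e : b ^+ 2 = 2%:R - ((2%:R - a) * a' - b * c' - c * b' + a * (2%:R - a'))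
    by rewrite b'0 -cb ea; ring.
  rewrite h5 subrr in e.
  by move: bn0; rewrite (sq0 _ e) eqxx.
- rewrite bn0 b'n0 => bb; subst b'.
  have e : (a - a') ^+ 2 = (1 - (a * (2%:R - a) - b * c)) + (1 - (a' * (2%:R - a') - b * c'))
     + (((2%:R - a) * a' - b * c' - c * b + a * (2%:R - a')) - 2%:R) by ring.
  rewrite h2 h4 h5 !subrr !addr0 in e.
  move/sq0/eqP: e; rewrite subr_eq0 => /eqP ea; subst a'.
  have cc : c = c'.
    apply: (mulfI bn0); apply/eqP; rewrite eq_sym -subr_eq0.
    have -> : b * c' - b * c = (a * (2%:R - a) - b * c) - (a * (2%:R - a) - b * c') by ring.
    by rewrite h2 h4 subrr.
  by split.
Qed.
End K.

Lemma SL2_unit p (g : 'M['F_p]_2) : g \in SL2 p -> g \in unitmx.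
Proof. by rewrite inE unitmxE => /eqP ->; rewrite unitr1. Qed.

Lemma SL2_det p (g : 'M['F_p]_2) : g \in SL2 p -> \det g = 1.
Proof. by rewrite inE => /eqP. Qed.

Definition U p (t : 'F_p) : 'M['F_p]_2 :=
  \matrix_(i, j) (if (i == 0) && (j == 1) then t else (i == j)%:R).

Lemma U00 p t : U t 0 0 = 1 :> 'F_p. Proof. by rewrite !mxE. Qed.
Lemma U01 p t : U t 0 1 = t :> 'F_p. Proof. by rewrite !mxE. Qed.
Lemma U10 p t : U t 1 0 = 0 :> 'F_p. Proof. by rewrite !mxE. Qed.
Lemma U11 p t : U t 1 1 = 1 :> 'F_p. Proof. by rewrite !mxE. Qed.

Local Close Scope ring_scope.
Theorem mainTheorem5 (p : nat) (hp : prime p) : p <= alpha p <= p.+1.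
Proof.
Local Open Scope ring_scope.
apply/andP; split.
  have hS : independent [set U t | t : 'F_p].
    apply/andP; split.
      apply/subsetP => _ /imsetP[t _ ->]; rewrite inE det2 U00 U01 U10 U11.
      by rewrite mulr1 mulr0 subr0.
    apply/forall_inP => _ /imsetP[s _ ->]; apply/forall_inP => _ /imsetP[t _ ->].
    apply/implyP => _; rewrite /cayley_adj inE negb_and negbK; apply/orP; right.
    rewrite trinv2; last by rewrite det2 U00 U01 U10 U11 mulr1 mulr0 subr0.
    by rewrite !U00 !U01 !U10 !U11 !mulr1 !mulr0 !mul0r !subr0.
  have := @leq_bigmax_cond _ (fun S : {set 'M['F_p]_2} => independent S) (fun S : {set 'M['F_p]_2} => #|S|) _ hS.
  rewrite card_in_imset ?card_Fp //.
  by move=> s t _ _ /(congr1 (fun M : 'M['F_p]_2 => M 0 1)); rewrite !U01.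
apply/bigmax_leqP => S /andP[sub ind].
case: (set_0Vmem S) => [->|[g0 g0S]]; first by rewrite cards0.
have ug0 := SL2_unit (subsetP sub _ g0S).
pose A (g : 'M['F_p]_2) := invmx g0 *m g.
pose f (g : 'M['F_p]_2) := if A g 0 1 != 0 then A g 0 1 else A g 1 0.
have hdet : forall g, g \in S -> \det (A g) = 1.
  move=> g gS; rewrite det_mulmx det_inv !SL2_det ?(subsetP sub) //.
  by rewrite invr1 mulr1.
have htr : forall g, g \in S -> \tr (A g) = 2%:R.
  move=> g gS; case: (eqVneq g g0) => [->|ne].
    by rewrite /A mulVmx // mxtrace1.
  move/forall_inP: ind => /(_ _ g0S)/forall_inP/(_ _ gS)/implyP.
  rewrite eq_sym ne => /(_ isT); rewrite /cayley_adj inE negb_and inE hdet //.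
  by rewrite eqxx /= negbK => /eqP.
have inj : {in S &, injective f}.
  move=> g h gS hS hf; case: (eqVneq g h) => [//|ne].
  have ug := SL2_unit (subsetP sub _ gS).
  have uA : A g \in unitmx by rewrite unitmxE hdet // unitr1.
  have X : invmx (A g) = invmx g *m g0.
    rewrite -[RHS](mulKmx uA).
    have -> : A g *m (invmx g *m g0) = 1%:M.
      by rewrite /A -mulmxA (mulKVmx ug) mulVmx.
    by rewrite mulmx1.
  have trAB : \tr (invmx (A g) *m A h) = 2%:R.
    rewrite X /A -mulmxA (mulKVmx ug0).
    move/forall_inP: ind => /(_ _ gS)/forall_inP/(_ _ hS)/implyP/(_ ne).
    rewrite /cayley_adj inE negb_and inE.
    rewrite det_mulmx det_inv !SL2_det ?(subsetP sub) // invr1 mulr1 eqxx /=.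
    by rewrite negbK => /eqP.
  rewrite trinv2 ?hdet // in trAB.
  have := htr _ gS; have := htr _ hS; rewrite !tr2 => t2 t1.
  have := hdet _ gS; have := hdet _ hS; rewrite !det2 => d2 d1.
  have [e1 e2 e3 e4] := key t1 d1 t2 d2 trAB hf.
  have eA : A g = A h.
    exact: mat2_eq.
  by move: ne; rewrite -(mulKVmx ug0 g) -(mulKVmx ug0 h) -/(A g) -/(A h) eA eqxx.
rewrite -(card_in_imset inj).
apply: leq_trans (leqnSn _).
apply: leq_trans (max_card _) _.
by rewrite card_Fp.
Qed.
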